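(* For a smooth function $f:\mathbb R^2\to\mathbb R$ let $v(f)=(-\partial_{x_2}f,\partial_{x_1}f)$. Let $\mathcal F=\{v(x_1),v(x_2),v(x_1^2x_2^2)\}=\{(0,1),(-1,0),(-2x_1^2x_2,2x_1x_2^2)\}$. Then $\operatorname{Lie}\mathcal F=\{v(f): f\in\mathbb R[x_1,x_2]\}$.
   Context: For smooth vector fields $f_1,f_2$ on $\mathbb R^2$ the Lie bracket is $[f_1,f_2]=(\nabla_x f_2)f_1-(\nabla_x f_1)f_2$. $\operatorname{Lie}\mathcal F$ denotes the smallest linear space of smooth vector fields that contains $\mathcal F$ and is closed under the Lie bracket. $\mathbb R[x_1,x_2]$ is the ring of real polynomials in $x_1,x_2$. *)

(* Defs.v *)
From Stdlib Require Import Reals List.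
From Coquelicot Require Import Coquelicot.
Open Scope R_scope.

Definition sfun := R -> R -> R.
Definition vfield := R -> R -> R * R.

Definition d1 (g : sfun) : sfun := fun x y => Derive (fun t => g t y) x.
Definition d2 (g : sfun) : sfun := fun x y => Derive (fun t => g x t) y.

Fixpoint iter_partial (ds : list bool) (g : sfun) : sfun :=
  match ds with
  | nil => g
  | d :: ds' => (if d then d2 else d1) (iter_partial ds' g)
  end.

Definition smooth_fun (g : sfun) : Prop :=
  forall (ds : list bool) (x y : R),
    ex_derive (fun t => iter_partial ds g t y) x /\
    ex_derive (fun t => iter_partial ds g x t) y /\
    continuous (fun p : R * R => iter_partial ds g (fst p) (snd p)) (x, y).

Definition comp1 (X : vfield) : sfun := fun x y => fst (X x y).
Definition comp2 (X : vfield) : sfun := fun x y => snd (X x y).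

Definition smooth_vf (X : vfield) : Prop :=
  smooth_fun (comp1 X) /\ smooth_fun (comp2 X).

(* Lie bracket [f1,f2] = (nabla f2) f1 - (nabla f1) f2. *)
Definition lie_bracket (f1 f2 : vfield) : vfield := fun x y =>
  ( d1 (comp1 f2) x y * comp1 f1 x y + d2 (comp1 f2) x y * comp2 f1 x y
    - (d1 (comp1 f1) x y * comp1 f2 x y + d2 (comp1 f1) x y * comp2 f2 x y),
    d1 (comp2 f2) x y * comp1 f1 x y + d2 (comp2 f2) x y * comp2 f1 x y
    - (d1 (comp2 f1) x y * comp1 f2 x y + d2 (comp2 f1) x y * comp2 f2 x y) ).

Definition vf_zero : vfield := fun _ _ => (0, 0).
Definition vf_add (X Y : vfield) : vfield :=
  fun x y => (comp1 X x y + comp1 Y x y, comp2 X x y + comp2 Y x y).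
Definition vf_scale (c : R) (X : vfield) : vfield :=
  fun x y => (c * comp1 X x y, c * comp2 X x y).

Definition smooth_linear_space (S : vfield -> Prop) : Prop :=
  (forall X, S X -> smooth_vf X) /\
  S vf_zero /\
  (forall X Y, S X -> S Y -> S (vf_add X Y)) /\
  (forall c X, S X -> S (vf_scale c X)).

Definition bracket_closed (S : vfield -> Prop) : Prop :=
  forall X Y, S X -> S Y -> S (lie_bracket X Y).

(* Lie F: the smallest linear space of smooth vector fields containing F and
   closed under the Lie bracket (intersection of all such spaces). *)
Definition Lie (F : vfield -> Prop) : vfield -> Prop := fun X =>
  forall S, smooth_linear_space S -> (forall Y, F Y -> S Y) -> bracket_closed S -> S X.

Definition v (f : sfun) : vfield := fun x y => (- d2 f x y, d1 f x y).

(* f is (the polynomial function of) an element of R[x1,x2]: a finite sum of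
   monomials c * x1^i * x2^j. *)
Definition monoms_eval (l : list (R * nat * nat)) : sfun := fun x y =>
  fold_right (fun m acc => match m with (c, i, j) => c * x ^ i * y ^ j + acc end) 0 l.

Definition is_poly2 (f : sfun) : Prop :=
  exists l : list (R * nat * nat), forall x y, f x y = monoms_eval l x y.

Definition F3 : vfield -> Prop := fun X =>
  X = v (fun x1 x2 => x1) \/ X = v (fun x1 x2 => x2) \/
  X = v (fun x1 x2 => x1 ^ 2 * x2 ^ 2).

(* Main.v *)
Require Import Defs.
From Stdlib Require Import Reals List Lra Lia FunctionalExtensionality.
From Coquelicot Require Import Coquelicot.
Open Scope R_scope.

Notation ev := monoms_eval.
Definition D1m (m : R*nat*nat) : R*nat*nat := match m with (c,i,j) => (c * INR i, pred i, j) end.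
Definition D2m (m : R*nat*nat) : R*nat*nat := match m with (c,i,j) => (c * INR j, i, pred j) end.
Definition D1l := map D1m.
Definition D2l := map D2m.
Definition scl (k : R) (l : list (R*nat*nat)) :=
  map (fun m : R*nat*nat => match m with (c,i,j) => (k*c,i,j) end) l.
Definition mulm (m1 m2 : R*nat*nat) : R*nat*nat :=
  match m1, m2 with (c1,i1,j1),(c2,i2,j2) => (c1*c2, (i1+i2)%nat, (j1+j2)%nat) end.
Definition mull (l1 l2 : list (R*nat*nat)) :=
  flat_map (fun m1 => map (mulm m1) l2) l1.
Definition pois l1 l2 := mull (D1l l1) (D2l l2) ++ scl (-1) (mull (D2l l1) (D1l l2)).

Lemma ev_cons c i j l x y : ev ((c,i,j)::l) x y = c * x^i * y^j + ev l x y.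
Proof. reflexivity. Qed.
Lemma ev_nil x y : ev nil x y = 0.
Proof. reflexivity. Qed.

Lemma ev_app l1 l2 x y : ev (l1++l2) x y = ev l1 x y + ev l2 x y.
Proof. induction l1 as [|[[c i] j] l IH]; simpl app; rewrite ?ev_cons, ?ev_nil, ?IH; ring. Qed.

Lemma ev_scl k l x y : ev (scl k l) x y = k * ev l x y.
Proof. induction l as [|[[c i] j] l IH]; simpl scl; rewrite ?ev_cons, ?ev_nil, ?IH; ring. Qed.

Lemma ev_mapm c i j l2 x y : ev (map (mulm (c,i,j)) l2) x y = c * x^i*y^j * ev l2 x y.
Proof. induction l2 as [|[[c2 i2] j2] l2 IH2]; cbn [map]; rewrite ?ev_cons, ?ev_nil; [ring|].
  unfold mulm at 1. rewrite ev_cons, IH2, !pow_add. ring. Qed.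

Lemma ev_mull l1 l2 x y : ev (mull l1 l2) x y = ev l1 x y * ev l2 x y.
Proof.
  induction l1 as [|[[c i] j] l IH]; unfold mull; cbn [flat_map]; [rewrite ev_nil; ring|].
  fold (mull l l2). rewrite ev_app, IH, ev_cons, ev_mapm. ring.
Qed.

Lemma D12 l x y : ev (D1l (D2l l)) x y = ev (D2l (D1l l)) x y.
Proof. induction l as [|[[c i] j] l IH]; [reflexivity|].
 change (D1l (D2l ((c,i,j)::l))) with ((c*INR j*INR i, pred i, pred j) :: D1l (D2l l)).
 change (D2l (D1l ((c,i,j)::l))) with ((c*INR i*INR j, pred i, pred j) :: D2l (D1l l)).
 rewrite !ev_cons, IH. ring. Qed.

Lemma isd1 l x y : is_derive (fun t => ev l t y) x (ev (D1l l) x y).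
Proof.
  induction l as [|[[c i] j] l IH]; simpl D1l.
  - exact (is_derive_const (K:=R_AbsRing) (V:=R_NormedModule) 0 _).
  - rewrite ev_cons. apply (is_derive_plus (K:=R_AbsRing) (V:=R_NormedModule) (fun t => c*t^i*y^j)); [|exact IH].
    replace (c * INR i * x ^ Init.Nat.pred i * y ^ j) with ((c * (INR i * 1 * x ^ Init.Nat.pred i)) * y^j) by ring.
    apply (is_derive_ext (fun t => y^j * (c * t^i))); [intro; simpl; ring|].
    rewrite Rmult_comm. apply is_derive_scal. apply is_derive_scal.
    apply (is_derive_pow (fun t => t)). apply (is_derive_id (K:=R_AbsRing)).
Qed.

Lemma isd2 l x y : is_derive (fun t => ev l x t) y (ev (D2l l) x y).
Proof.
  induction l as [|[[c i] j] l IH]; simpl D2l.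
  - exact (is_derive_const (K:=R_AbsRing) (V:=R_NormedModule) 0 _).
  - rewrite ev_cons. apply (is_derive_plus (K:=R_AbsRing) (V:=R_NormedModule) (fun t => c*x^i*t^j)); [|exact IH].
    replace (c * INR j * x ^ i * y ^ Init.Nat.pred j) with ((c * x^i) * (INR j * 1 * y ^ Init.Nat.pred j)) by ring.
    apply is_derive_scal.
    apply (is_derive_pow (fun t => t)). apply (is_derive_id (K:=R_AbsRing)).
Qed.

Lemma d1_ev l : Defs.d1 (ev l) = ev (D1l l).
Proof. do 2 (apply functional_extensionality; intro). unfold Defs.d1. apply is_derive_unique, isd1. Qed.
Lemma d2_ev l : Defs.d2 (ev l) = ev (D2l l).
Proof. do 2 (apply functional_extensionality; intro). unfold Defs.d2. apply is_derive_unique, isd2. Qed.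

Lemma v_ev l : v (ev l) = fun x y => (- ev (D2l l) x y, ev (D1l l) x y).
Proof. unfold v. rewrite d1_ev, d2_ev. reflexivity. Qed.

Lemma cont_pow (f : R*R -> R) z n : continuous f z -> continuous (fun p => f p ^ n) z.
Proof. intro H. induction n; simpl.
 - apply continuous_const.
 - apply (continuous_mult (K:=R_AbsRing)); auto. Qed.

Lemma cont_ev l x y : continuous (fun p : R*R => ev l (fst p) (snd p)) (x,y).
Proof.
  induction l as [|[[c i] j] l IH].
  - apply continuous_const.
  - apply (continuous_plus (K:=R_AbsRing) (V:=R_NormedModule) (fun p : R*R => c * fst p ^ i * snd p ^ j)); [|exact IH].
    apply (continuous_mult (K:=R_AbsRing)). apply (continuous_mult (K:=R_AbsRing)).
    apply continuous_const. apply cont_pow, continuous_fst. apply cont_pow, continuous_snd.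
Qed.

Fixpoint iterD (ds : list bool) l := match ds with nil => l | d :: ds' => (if d then D2l else D1l) (iterD ds' l) end.
Lemma iter_ev ds l : iter_partial ds (ev l) = ev (iterD ds l).
Proof. induction ds as [|d ds IH]; simpl; [reflexivity|]. rewrite IH. destruct d; [apply d2_ev|apply d1_ev]. Qed.

Lemma smooth_ev l : smooth_fun (ev l).
Proof. intros ds x y. rewrite iter_ev. split; [|split].
 - eexists; apply isd1. - eexists; apply isd2. - apply cont_ev. Qed.

Lemma D1_scl k l x y : ev (D1l (scl k l)) x y = k * ev (D1l l) x y.
Proof. induction l as [|[[c i] j] l IH]; [simpl; ring|].
 change (D1l (scl k ((c,i,j)::l))) with ((k*c*INR i, pred i, j) :: D1l (scl k l)).
 change (D1l ((c,i,j)::l)) with ((c*INR i, pred i, j) :: D1l l).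
 rewrite !ev_cons, IH. ring. Qed.
Lemma D2_scl k l x y : ev (D2l (scl k l)) x y = k * ev (D2l l) x y.
Proof. induction l as [|[[c i] j] l IH]; [simpl; ring|].
 change (D2l (scl k ((c,i,j)::l))) with ((k*c*INR j, i, pred j) :: D2l (scl k l)).
 change (D2l ((c,i,j)::l)) with ((c*INR j, i, pred j) :: D2l l).
 rewrite !ev_cons, IH. ring. Qed.

Lemma v_ev_ext l1 l2 : (forall x y, ev (D1l l1) x y = ev (D1l l2) x y) ->
  (forall x y, ev (D2l l1) x y = ev (D2l l2) x y) -> v (ev l1) = v (ev l2).
Proof. intros H1 H2. rewrite !v_ev. do 2 (apply functional_extensionality; intro).
  rewrite H1, H2. reflexivity. Qed.

Lemma v_nil : v (ev nil) = vf_zero.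
Proof. rewrite v_ev. do 2 (apply functional_extensionality; intro). unfold vf_zero.
  simpl. f_equal; ring. Qed.

Lemma v_app l1 l2 : v (ev (l1++l2)) = vf_add (v (ev l1)) (v (ev l2)).
Proof. unfold vf_add, comp1, comp2. rewrite !v_ev. do 2 (apply functional_extensionality; intro).
  simpl. unfold D1l, D2l. rewrite !map_app, !ev_app. f_equal; ring. Qed.

Lemma v_scl k l : v (ev (scl k l)) = vf_scale k (v (ev l)).
Proof. unfold vf_scale, comp1, comp2. rewrite !v_ev. do 2 (apply functional_extensionality; intro).
  simpl. rewrite D1_scl, D2_scl. f_equal; ring. Qed.

Lemma isd_mult f g x a b : is_derive f x a -> is_derive g x b ->
  is_derive (fun t => f t * g t) x (a * g x + f x * b).
Proof. intros Ha Hb. apply (is_derive_mult f g x a b Ha Hb). intros; apply Rmult_comm. Qed.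

Lemma isd_minus f g x a b : is_derive f x a -> is_derive g x b ->
  is_derive (fun t => f t - g t) x (a - b).
Proof. intros Ha Hb. apply (is_derive_minus f g x a b Ha Hb). Qed.

Lemma isdm1 A B x y : is_derive (fun t => ev A t y * ev B t y) x (ev (D1l A) x y * ev B x y + ev A x y * ev (D1l B) x y).
Proof. apply (isd_mult (fun t => ev A t y) (fun t => ev B t y)); apply isd1. Qed.
Lemma isdm2 A B x y : is_derive (fun t => ev A x t * ev B x t) y (ev (D2l A) x y * ev B x y + ev A x y * ev (D2l B) x y).
Proof. apply (isd_mult (fun t => ev A x t) (fun t => ev B x t)); apply isd2. Qed.

Lemma ev_pois l1 l2 x y : ev (pois l1 l2) x y =
  ev (D1l l1) x y * ev (D2l l2) x y - ev (D2l l1) x y * ev (D1l l2) x y.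
Proof. unfold pois. rewrite ev_app, ev_scl, !ev_mull. ring. Qed.

Lemma D1_pois l1 l2 x y : ev (D1l (pois l1 l2)) x y =
  (ev (D1l (D1l l1)) x y * ev (D2l l2) x y + ev (D1l l1) x y * ev (D1l (D2l l2)) x y)
  - (ev (D1l (D2l l1)) x y * ev (D1l l2) x y + ev (D2l l1) x y * ev (D1l (D1l l2)) x y).
Proof. transitivity (Derive (fun t => ev (pois l1 l2) t y) x). { symmetry; apply is_derive_unique, isd1. }
  apply is_derive_unique. eapply is_derive_ext. { intro t. symmetry. apply ev_pois. }
  apply isd_minus; apply isdm1. Qed.

Lemma D2_pois l1 l2 x y : ev (D2l (pois l1 l2)) x y =
  (ev (D2l (D1l l1)) x y * ev (D2l l2) x y + ev (D1l l1) x y * ev (D2l (D2l l2)) x y)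
  - (ev (D2l (D2l l1)) x y * ev (D1l l2) x y + ev (D2l l1) x y * ev (D2l (D1l l2)) x y).
Proof. transitivity (Derive (fun t => ev (pois l1 l2) x t) y). { symmetry; apply is_derive_unique, isd2. }
  apply is_derive_unique. eapply is_derive_ext. { intro t. symmetry. apply ev_pois. }
  apply isd_minus; apply isdm2. Qed.

Lemma c1_v l : comp1 (v (ev l)) = ev (scl (-1) (D2l l)).
Proof. unfold comp1. rewrite v_ev. do 2 (apply functional_extensionality; intro).
  rewrite ev_scl. simpl. ring. Qed.
Lemma c2_v l : comp2 (v (ev l)) = ev (D1l l).
Proof. unfold comp2. rewrite v_ev. reflexivity. Qed.

Lemma br_ev l1 l2 : lie_bracket (v (ev l1)) (v (ev l2)) = v (ev (pois l1 l2)).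
Proof.
  unfold lie_bracket. rewrite !c1_v, !c2_v, !d1_ev, !d2_ev, (v_ev (pois l1 l2)).
  do 2 (apply functional_extensionality; intro).
  rewrite D1_pois, D2_pois, !D1_scl, !D2_scl, !(D12 l1), !(D12 l2), !ev_scl.
  f_equal; ring.
Qed.

Lemma LieZ F : Lie F vf_zero. Proof. intros S [_ [Hz _]] _ _; exact Hz. Qed.
Lemma LieA F X Y : Lie F X -> Lie F Y -> Lie F (vf_add X Y).
Proof. intros HX HY S HS HF HB. pose proof HS as [_ [_ [Ha _]]]. apply Ha; [apply HX|apply HY]; auto. Qed.
Lemma LieS F c X : Lie F X -> Lie F (vf_scale c X).
Proof. intros HX S HS HF HB. pose proof HS as [_ [_ [_ Hs]]]. apply Hs; apply HX; auto. Qed.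
Lemma LieB F X Y : Lie F X -> Lie F Y -> Lie F (lie_bracket X Y).
Proof. intros HX HY S HS HF HB. apply HB; [apply HX|apply HY]; auto. Qed.
Lemma LieF (F : vfield -> Prop) X : F X -> Lie F X.
Proof. intros HX S HS HF HB. auto. Qed.

Lemma v_ext f g : (forall x y, f x y = g x y) -> v f = v g.
Proof. intro H. f_equal. do 2 (apply functional_extensionality; intro). apply H. Qed.

Definition M a b := Lie F3 (v (ev ((1,a,b)::nil))).

Lemma step p q c d a b k : k <> 0 ->
  (forall x y, ev (pois ((1,p,q)::nil) ((1,c,d)::nil)) x y = k * (x^a * y^b)) ->
  M p q -> M c d -> M a b.
Proof. intros Hk H Hp Hc. unfold M.
  rewrite (v_ext _ (ev (scl (/k) (pois ((1,p,q)::nil) ((1,c,d)::nil))))).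
  - rewrite v_scl, <- br_ev. apply LieS, LieB; assumption.
  - intros x y. rewrite ev_scl, H, ev_cons, ev_nil. field. exact Hk.
Qed.

Ltac pz := intros x y; rewrite ev_pois; unfold monoms_eval; cbn [fold_right map D1m D2m D1l D2l pred]; simpl; ring.

Lemma M10 : M 1 0.
Proof. unfold M. rewrite (v_ext _ (fun x1 x2 => x1)). apply LieF; left; reflexivity.
  intros; simpl; ring. Qed.
Lemma M01 : M 0 1.
Proof. unfold M. rewrite (v_ext _ (fun x1 x2 => x2)). apply LieF; right; left; reflexivity.
  intros; simpl; ring. Qed.
Lemma M22 : M 2 2.
Proof. unfold M. rewrite (v_ext _ (fun x1 x2 => x1^2 * x2^2)). apply LieF; right; right; reflexivity.
  intros; simpl; ring. Qed.
Lemma M00 : M 0 0.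
Proof. unfold M. rewrite (v_ev_ext _ nil), v_nil. apply LieZ.
  all: intros; simpl; ring. Qed.
Lemma M21 : M 2 1. Proof. apply (step 1 0 2 2 2 1 2); [lra|pz|apply M10|apply M22]. Qed.
Lemma M12 : M 1 2. Proof. apply (step 0 1 2 2 1 2 (-2)); [lra|pz|apply M01|apply M22]. Qed.
Lemma M11 : M 1 1. Proof. apply (step 0 1 2 1 1 1 (-2)); [lra|pz|apply M01|apply M21]. Qed.
Lemma M20 : M 2 0. Proof. apply (step 1 0 2 1 2 0 1); [lra|pz|apply M10|apply M21]. Qed.
Lemma M02 : M 0 2. Proof. apply (step 0 1 1 2 0 2 (-1)); [lra|pz|apply M01|apply M12]. Qed.
Lemma M30 : M 3 0. Proof. apply (step 2 0 2 1 3 0 2); [lra|pz|apply M20|apply M21]. Qed.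
Lemma M03 : M 0 3. Proof. apply (step 0 2 1 2 0 3 (-2)); [lra|pz|apply M02|apply M12]. Qed.

Lemma INRS_pos n : 0 < INR (S n). Proof. apply lt_0_INR; lia. Qed.

Lemma allM n : forall a b, (a + b <= n)%nat -> M a b.
Proof.
  induction n as [|n IH]; intros a b Hab.
  - assert (a = 0%nat) by lia; assert (b = 0%nat) by lia; subst; apply M00.
  - destruct a as [|[|a']].
    2: destruct b as [|[|b']]; [apply M10|apply M11|].
    1: destruct b as [|[|b']]; [apply M00|apply M01|].
    1,2: match goal with |- M ?a (S (S ?b')) =>
      apply (step (S a) b' 0 3 a (S (S b')) (INR (S a) * INR 3));
      [pose proof (INRS_pos a); simpl (INR 3); nra
      |intros x y; rewrite ev_pois; unfold monoms_eval; cbn [fold_right map D1m D2m D1l D2l pred];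
       change (INR 0) with 0; replace (S (S b')) with (b' + 2)%nat by lia; rewrite pow_add; ring
      |apply IH; lia|apply M03] end.
    apply (step a' (S b) 3 0 (S (S a')) b (-(INR (S b) * INR 3)));
      [pose proof (INRS_pos b); simpl (INR 3); nra
      |intros x y; rewrite ev_pois; unfold monoms_eval; cbn [fold_right map D1m D2m D1l D2l pred];
       change (INR 0) with 0; replace (S (S a')) with (a' + 2)%nat by lia; rewrite pow_add; ring
      |apply IH; lia|apply M30].
Qed.

Lemma Lie_ev l : Lie F3 (v (ev l)).
Proof.
  induction l as [|[[c i] j] l IH].
  - rewrite v_nil. apply LieZ.
  - change ((c,i,j)::l) with (((c,i,j)::nil) ++ l). rewrite v_app. apply LieA; [|exact IH].
    rewrite (v_ext _ (ev (scl c ((1,i,j)::nil)))).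
    + rewrite v_scl. apply LieS. apply (allM (i+j)); lia.
    + intros; simpl; ring.
Qed.

Theorem lemma3p12 :
  forall X : vfield, Lie F3 X <-> (exists f : sfun, is_poly2 f /\ X = v f).
Proof.
  intro X. split.
  - intro H.
    assert (HS : exists l, X = v (ev l)).
    { apply (H (fun X => exists l, X = v (ev l))).
      - split; [|split; [|split]].
        + intros Y [l ->]. split; [rewrite c1_v|rewrite c2_v]; apply smooth_ev.
        + exists nil. symmetry; apply v_nil.
        + intros Y Z [l1 ->] [l2 ->]. exists (l1 ++ l2). symmetry; apply v_app.
        + intros c Y [l ->]. exists (scl c l). symmetry; apply v_scl.
      - intros Y [HY|[HY|HY]]; subst Y.
        + exists ((1,1%nat,0%nat)::nil). apply v_ext. intros; simpl; ring.
        + exists ((1,0%nat,1%nat)::nil). apply v_ext. intros; simpl; ring.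
        + exists ((1,2%nat,2%nat)::nil). apply v_ext. intros; simpl; ring.
      - intros Y Z [l1 ->] [l2 ->]. exists (pois l1 l2). apply br_ev. }
    destruct HS as [l ->]. exists (ev l). split; [exists l; reflexivity|reflexivity].
  - intros [f [[l Hl] ->]]. rewrite (v_ext _ (ev l) Hl). apply Lie_ev.
Qed.
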